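(* Let $A\ge0$ and let $c:[a,b]\times S^1\to\mathbb R^2$ be a smooth horizontal path of immersions ($\langle c_t,c_\theta\rangle\equiv0$), and write $c_t=a\,ic_\theta/|c_\theta|$ with $a$ a smooth real function. Then $c$ satisfies the geodesic equation $$\big((1+A\kappa^2)|c_\theta|c_t\big)_t=\Big(\frac{-1+A\kappa^2}{2}\frac{|c_t|^2}{|c_\theta|}c_\theta+A\frac{(\kappa|c_t|^2)_\theta}{|c_\theta|^2}ic_\theta\Big)_\theta$$ if and only if $$\big((1+A\kappa^2)a\big)_t=\frac{1+3A\kappa^2}{2}\,\kappa a^2+A(\kappa a^2)_{ss},$$ where $f_s:=f_\theta/|c_\theta|$ denotes the arclength derivative. Moreover, along any such horizontal path, $|c_\theta|_t=-a\kappa|c_\theta|$.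
   Context: $S^1=\mathbb R/2\pi\mathbb Z$, $\mathbb R^2\cong\mathbb C$. Subscripts $t,\theta$ are partial derivatives. $\kappa=\kappa_{c(t)}=\det(c_\theta,c_{\theta\theta})/|c_\theta|^3$. *)

(* Defs.v *)
From Stdlib Require Import Reals List.
From Coquelicot Require Import Coquelicot.
Open Scope R_scope.

(* A scalar field on (an open neighbourhood of) [t0,t1] x S^1, as a function of
   (t, theta) : R x R; periodicity in theta encodes S^1 = R / 2piZ. *)
Definition F2 := R -> R -> R.

Definition pt (f : F2) : F2 := fun t th => Derive (fun s => f s th) t.
Definition pth (f : F2) : F2 := fun t th => Derive (fun s => f t s) th.

(* iterated partial derivatives: true = d/dt, false = d/dtheta *)
Fixpoint pd (l : list bool) (f : F2) : F2 :=
  match l with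
  | nil => f
  | b :: l' => if b then pt (pd l' f) else pth (pd l' f)
  end.

Definition smooth2 (f : F2) : Prop :=
  forall l : list bool,
    (forall t th, ex_derive (fun s => pd l f s th) t /\
                  ex_derive (fun s => pd l f t s) th) /\
    (forall p : R * R, continuous (fun q : R * R => pd l f (fst q) (snd q)) p).

Definition periodic2 (f : F2) : Prop :=
  forall t th, f t (th + 2 * PI) = f t th.

(* A curve/path c = (cx, cy) in R^2 = C.  i*(u,v) = (-v,u). *)

Definition speed (cx cy : F2) : F2 :=
  fun t th => sqrt ((pth cx t th)^2 + (pth cy t th)^2).

Definition kappa (cx cy : F2) : F2 :=
  fun t th => (pth cx t th * pth (pth cy) t th - pth cy t th * pth (pth cx) t th)
              / (speed cx cy t th)^3.

Definition ct2 (cx cy : F2) : F2 :=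
  fun t th => (pt cx t th)^2 + (pt cy t th)^2.

Definition ds (cx cy : F2) (f : F2) : F2 :=
  fun t th => pth f t th / speed cx cy t th.

Definition geodesic_eq (A : R) (cx cy : F2) (t th : R) : Prop :=
  let k := kappa cx cy in
  let sp := speed cx cy in
  let K2 := ct2 cx cy in
  let W := pth (fun t th => k t th * K2 t th) in
  pt (fun t th => (1 + A * (k t th)^2) * sp t th * pt cx t th) t th =
  pth (fun t th => (-1 + A * (k t th)^2) / 2 * (K2 t th / sp t th) * pth cx t th
                   + A * (W t th / (sp t th)^2) * (- pth cy t th)) t th
  /\
  pt (fun t th => (1 + A * (k t th)^2) * sp t th * pt cy t th) t th =
  pth (fun t th => (-1 + A * (k t th)^2) / 2 * (K2 t th / sp t th) * pth cy t th
                   + A * (W t th / (sp t th)^2) * (pth cx t th)) t th.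

Definition a_eq (A : R) (cx cy a : F2) (t th : R) : Prop :=
  let k := kappa cx cy in
  pt (fun t th => (1 + A * (k t th)^2) * a t th) t th =
  (1 + 3 * A * (k t th)^2) / 2 * k t th * (a t th)^2
  + A * ds cx cy (ds cx cy (fun t th => k t th * (a t th)^2)) t th.

(* Main.v *)
Require Import Defs.
From Stdlib Require Import Reals Lra.
From Coquelicot Require Import Coquelicot.
Open Scope R_scope.

Definition kap (X Y : R -> R) u := (X u * Derive Y u - Y u * Derive X u)/ (sqrt (X u^2 + Y u^2))^3.

Ltac fixup X Y u :=
  change (Derive (fun x => X x) u) with (Derive X u) in *;
  change (Derive (fun x => Y x) u) with (Derive Y u) in *;
  replace (X u * (X u * 1) + Y u * (Y u * 1)) with (X u^2 + Y u^2) by ring.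

Lemma sp_der (X Y : R -> R) u: ex_derive X u -> ex_derive Y u -> 0 < X u^2 + Y u^2 ->
  is_derive (fun v => sqrt (X v ^2 + Y v ^2)) u ((X u * Derive X u + Y u * Derive Y u)/ sqrt(X u^2+Y u^2)).
Proof.
intros HX HY Hp. auto_derive.
- repeat split; auto.
- fixup X Y u. assert (0 < sqrt (X u ^2 + Y u ^2)) by (apply sqrt_lt_R0; auto). field. lra.
Qed.

Lemma n1_der (X Y : R -> R) u: ex_derive X u -> ex_derive Y u -> 0 < X u^2 + Y u^2 ->
  is_derive (fun v => X v / sqrt(X v^2+Y v^2)) u (- kap X Y u * Y u).
Proof.
intros HX HY Hp. unfold kap. auto_derive.
- repeat split; auto. apply Rgt_not_eq. apply sqrt_lt_R0; auto.
- fixup X Y u. assert (Hs: 0 < sqrt (X u ^2 + Y u ^2)) by (apply sqrt_lt_R0; auto).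
  assert (Hr: sqrt (X u ^2 + Y u ^2) * sqrt (X u ^2 + Y u ^2) = X u ^2 + Y u^2) by (apply sqrt_sqrt; lra).
  set (S := sqrt (X u ^2 + Y u ^2)) in *.
  field_simplify_eq; [|lra].
  replace (S^2) with (X u^2+Y u^2) by (rewrite <- Hr; ring); ring.
Qed.

Lemma n2_der (X Y : R -> R) u: ex_derive X u -> ex_derive Y u -> 0 < X u^2 + Y u^2 ->
  is_derive (fun v => Y v / sqrt(X v^2+Y v^2)) u (kap X Y u * X u).
Proof.
intros HX HY Hp. unfold kap. auto_derive.
- repeat split; auto. apply Rgt_not_eq. apply sqrt_lt_R0; auto.
- fixup X Y u. assert (Hs: 0 < sqrt (X u ^2 + Y u ^2)) by (apply sqrt_lt_R0; auto).
  assert (Hr: sqrt (X u ^2 + Y u ^2) * sqrt (X u ^2 + Y u ^2) = X u ^2 + Y u^2) by (apply sqrt_sqrt; lra).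
  set (S := sqrt (X u ^2 + Y u ^2)) in *.
  field_simplify_eq; [|lra].
  replace (S^2) with (X u^2+Y u^2) by (rewrite <- Hr; ring); ring.
Qed.
Ltac eta_old := repeat match goal with |- context [Derive (fun x => ?f x) ?u] => change (Derive (fun x => f x) u) with (Derive f u) end.
Ltac eta_fix := repeat match goal with |- context [Derive (fun x => ?f x) ?u] => let d := fresh "d" in set (d := Derive f u) in * end.

Lemma comb (P n1 Q n2 : R->R) u A dP dn1 dQ dn2 : is_derive P u dP -> is_derive n1 u dn1 -> is_derive Q u dQ -> is_derive n2 u dn2 -> is_derive (fun v => P v * n1 v + A * Q v * n2 v) u (dP*n1 u + P u*dn1 + A*(dQ*n2 u + Q u*dn2)).
Proof.
intros H1 H2 H3 H4. auto_derive.
- repeat split; eexists; eauto.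
- eta_old. rewrite (is_derive_unique _ _ _ H1), (is_derive_unique _ _ _ H2), (is_derive_unique _ _ _ H3), (is_derive_unique _ _ _ H4). ring.
Qed.

Lemma Derive_eq_on (f g : R -> R) t0 t1 t : t0 < t1 -> t0 <= t <= t1 -> ex_derive f t -> ex_derive g t ->
  (forall r, t0 <= r <= t1 -> f r = g r) -> Derive f t = Derive g t.
Proof.
intros H01 Ht Hf Hg Heq.
assert (Hh: is_derive (fun r => f r - g r) t (Derive f t - Derive g t)).
{ auto_derive; [repeat split; auto | eta_fix; ring]. }
apply is_derive_Reals in Hh.
set (l := Derive f t - Derive g t) in *.
destruct (Req_dec l 0) as [Hl|Hl]; [unfold l in Hl; lra|].
exfalso.
assert (He: 0 < Rabs l) by (apply Rabs_pos_lt; auto).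
destruct (Hh (Rabs l) He) as [d Hd].
assert (Hd0 := cond_pos d).
destruct (Rlt_or_le t t1) as [Hlt|Hge].
- set (hh := Rmin (d/2) (t1 - t)).
  assert (0 < hh) by (unfold hh; apply Rmin_glb_lt; lra).
  assert (hh <= d/2) by apply Rmin_l.
  assert (hh <= t1 - t) by apply Rmin_r.
  specialize (Hd hh ltac:(lra) ltac:(rewrite Rabs_pos_eq; lra)).
  rewrite (Heq (t+hh)) in Hd by lra. rewrite (Heq t) in Hd by lra.
  replace ((g (t + hh) - g (t + hh) - (g t - g t)) / hh - l) with (- l) in Hd by (field; lra).
  rewrite Rabs_Ropp in Hd. lra.
- set (hh := - Rmin (d/2) (t - t0)).
  assert (0 < Rmin (d/2) (t - t0)) by (apply Rmin_glb_lt; lra).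
  assert (Rmin (d/2) (t - t0) <= d/2) by apply Rmin_l.
  assert (Rmin (d/2) (t - t0) <= t - t0) by apply Rmin_r.
  specialize (Hd hh ltac:(unfold hh; lra) ltac:(unfold hh; rewrite Rabs_Ropp, Rabs_pos_eq; lra)).
  rewrite (Heq (t+hh)) in Hd by (unfold hh; lra). rewrite (Heq t) in Hd by lra.
  replace ((g (t + hh) - g (t + hh) - (g t - g t)) / hh - l) with (- l) in Hd by (field; unfold hh; lra).
  rewrite Rabs_Ropp in Hd. lra.
Qed.

Lemma pos_aux (X Y : R -> R) v : 0 < X v^2 + Y v^2 -> 0 < X v * (X v * 1) + Y v * (Y v * 1).
Proof. intros; replace (X v * (X v * 1) + Y v * (Y v * 1)) with (X v^2 + Y v^2) by ring; auto. Qed.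

Lemma pos_aux2 (X Y : R -> R) v : 0 < X v^2 + Y v^2 -> sqrt (X v * (X v * 1) + Y v * (Y v * 1)) <> 0.
Proof. intros; replace (X v * (X v * 1) + Y v * (Y v * 1)) with (X v^2 + Y v^2) by ring; apply Rgt_not_eq, sqrt_lt_R0; auto. Qed.


Ltac side_one := first [ exact I
 | match goal with H: forall v, ex_derive _ v |- ex_derive _ _ => apply H end
 | match goal with H: forall v, 0 < _ |- 0 < _ => apply pos_aux; apply H end
 | match goal with H: forall v, 0 < ?X v ^2 + ?Y v ^2 |- context [sqrt ?q] =>
     let h := fresh in assert (h : 0 < sqrt q) by (apply sqrt_lt_R0; apply pos_aux; apply H);
     apply Rgt_not_eq; repeat apply Rmult_lt_0_compat; lra end ].
Ltac side := repeat split; try side_one.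

Lemma kap_D X Y :
  (forall v, ex_derive X v) -> (forall v, ex_derive (Derive X) v) -> (forall v, ex_derive (Derive (Derive X)) v) ->
  (forall v, ex_derive Y v) -> (forall v, ex_derive (Derive Y) v) -> (forall v, ex_derive (Derive (Derive Y)) v) ->
  (forall v, 0 < X v^2+Y v^2) ->
  exists D : R -> R, (forall v, is_derive (kap X Y) v (D v)) /\ (forall v, ex_derive D v).
Proof.
intros HX0 HX1 HX2 HY0 HY1 HY2 Hp.
eexists; split.
- intro v. unfold kap. auto_derive.
  + side.
  + reflexivity.
- intro v. auto_derive. side.
Qed.

Definition Hsm (X:R->R) := forall v, ex_derive X v /\ ex_derive (Derive X) v /\ ex_derive (Derive (Derive X)) v.
Definition Hsa (X:R->R) := forall v, ex_derive X v /\ ex_derive (Derive X) v.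

Lemma kap_ex X Y : Hsm X -> Hsm Y -> (forall v, 0 < X v^2+Y v^2) ->
  forall v, ex_derive (kap X Y) v /\ ex_derive (Derive (kap X Y)) v.
Proof.
intros HX HY Hp v.
destruct (kap_D X Y) as [D [H1 H2]]; [intro w; apply (HX w)|intro w; apply (HX w)|intro w; apply (HX w)|intro w; apply (HY w)|intro w; apply (HY w)|intro w; apply (HY w)|auto|].
split. exists (D v); auto.
apply (ex_derive_ext D (Derive (kap X Y)) v); auto.
intro w. symmetry. apply is_derive_unique; auto.
Qed.

Lemma m_der X Y a u : Hsm X -> Hsm Y -> Hsa a -> (forall v, 0 < X v^2+Y v^2) ->
  Derive (fun r => kap X Y r * a r ^2) u = Derive (kap X Y) u * a u^2 + kap X Y u * (2 * a u * Derive a u).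
Proof.
intros HX HY Ha Hp. destruct (kap_ex X Y HX HY Hp u) as [Hk1 Hk2]. destruct (Ha u) as [Ha1 Ha2].
apply is_derive_unique. auto_derive. side; auto. eta_fix. ring.
Qed.

Lemma Q_ex X Y a u : Hsm X -> Hsm Y -> Hsa a -> (forall v, 0 < X v^2+Y v^2) ->
  ex_derive (fun u => Derive (fun r => kap X Y r * a r ^2) u / sqrt (X u^2 + Y u^2)) u.
Proof.
intros HX HY Ha Hp.
apply (ex_derive_ext (fun u => (Derive (kap X Y) u * a u^2 + kap X Y u * (2 * a u * Derive a u)) / sqrt (X u^2 + Y u^2))).
{ intro w. rewrite m_der; auto. }
assert (HX0: forall v, ex_derive X v) by (intro v; exact (proj1 (HX v))).
assert (HY0: forall v, ex_derive Y v) by (intro v; exact (proj1 (HY v))).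
assert (Ha0: forall v, ex_derive a v) by (intro v; exact (proj1 (Ha v))).
assert (Ha1: forall v, ex_derive (Derive a) v) by (intro v; exact (proj2 (Ha v))).
assert (Hk0: forall v, ex_derive (kap X Y) v) by (intro v; exact (proj1 (kap_ex X Y HX HY Hp v))).
assert (Hk1: forall v, ex_derive (Derive (kap X Y)) v) by (intro v; exact (proj2 (kap_ex X Y HX HY Hp v))).
auto_derive. side.
Qed.

Lemma is_derive_extR (f g : R->R) x l : (forall t, f t = g t) -> is_derive f x l -> is_derive g x l.
Proof. apply is_derive_ext. Qed.

Lemma mulD (f g : R -> R) u df dg: is_derive f u df -> is_derive g u dg -> is_derive (fun v => f v * g v) u (df * g u + f u * dg).
Proof.
intros H1 H2. auto_derive.
- repeat split; eexists; eauto.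
- eta_old. rewrite (is_derive_unique _ _ _ H1), (is_derive_unique _ _ _ H2). ring.
Qed.

Lemma oppD (g : R -> R) u dg: is_derive g u dg -> is_derive (fun v => - g v) u (- dg).
Proof.
intros H2. auto_derive.
- repeat split; eexists; eauto.
- eta_old. rewrite (is_derive_unique _ _ _ H2). ring.
Qed.

Lemma an1_der (X Y a : R -> R) u: ex_derive X u -> ex_derive Y u -> ex_derive a u -> 0 < X u^2 + Y u^2 ->
  Derive (fun v => a v * X v / sqrt(X v^2+Y v^2)) u = Derive a u * (X u / sqrt (X u^2+Y u^2)) + a u * (- kap X Y u * Y u).
Proof.
intros HX HY Ha Hp. apply is_derive_unique.
apply (is_derive_extR (fun v => a v * (X v / sqrt(X v^2+Y v^2)))).
{ intro v. unfold Rdiv. ring. }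
apply (mulD a (fun v => X v / sqrt (X v^2+Y v^2))). apply Derive_correct; auto. apply n1_der; auto.
Qed.

Lemma an2_der (X Y a : R -> R) u: ex_derive X u -> ex_derive Y u -> ex_derive a u -> 0 < X u^2 + Y u^2 ->
  Derive (fun v => a v * (- Y v) / sqrt(X v^2+Y v^2)) u = Derive a u * (- (Y u / sqrt (X u^2+Y u^2))) + a u * (- (kap X Y u * X u)).
Proof.
intros HX HY Ha Hp. apply is_derive_unique.
apply (is_derive_extR (fun v => a v * (- (Y v / sqrt(X v^2+Y v^2))))).
{ intro v. unfold Rdiv. ring. }
apply (mulD a (fun v => - (Y v / sqrt (X v^2+Y v^2)))). apply Derive_correct; auto. apply (oppD (fun v => Y v / sqrt (X v^2+Y v^2))). apply n2_der; auto.
Qed.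

Lemma P_der X Y a A th : Hsm X -> Hsm Y -> Hsa a -> (forall v, 0 < X v^2+Y v^2) ->
  is_derive (fun u => (-1 + A*(kap X Y u)^2)/2 * a u^2) th
   (A*kap X Y th*Derive (kap X Y) th*a th^2 + (-1 + A*kap X Y th^2)*a th*Derive a th).
Proof.
intros HX HY Ha Hp. destruct (kap_ex X Y HX HY Hp th) as [Hk1 Hk2]. destruct (Ha th) as [Ha1 Ha2].
auto_derive. side; auto. eta_fix. field.
Qed.

Lemma rhsx X Y a A th : Hsm X -> Hsm Y -> Hsa a -> (forall v, 0 < X v^2+Y v^2) ->
 Derive (fun u => (-1 + A*(kap X Y u)^2)/2 * (a u^2 / sqrt (X u^2+Y u^2)) * X u
     + A*(Derive (fun r => kap X Y r * a r^2) u / (sqrt (X u^2+Y u^2))^2) * (- Y u)) th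
 = (A*kap X Y th*Derive (kap X Y) th*a th^2 + (-1 + A*kap X Y th^2)*a th*Derive a th) * (X th / sqrt (X th^2+Y th^2))
   + ((-1 + A*(kap X Y th)^2)/2 * a th^2) * (- kap X Y th * Y th)
   + (-A) * (Derive (fun u => Derive (fun r => kap X Y r * a r ^2) u / sqrt (X u^2 + Y u^2)) th * (Y th / sqrt (X th^2+Y th^2))
       + ((Derive (kap X Y) th * a th^2 + kap X Y th * (2 * a th * Derive a th)) / sqrt (X th^2+Y th^2)) * (kap X Y th * X th)).
Proof.
intros HX HY Ha Hp.
assert (Hs: forall u, sqrt (X u^2+Y u^2) <> 0) by (intro u; apply Rgt_not_eq, sqrt_lt_R0; auto).
rewrite (Derive_ext _ (fun u => ((-1 + A*(kap X Y u)^2)/2 * a u^2) * (X u / sqrt(X u^2+Y u^2)) + (-A) * (Derive (fun r => kap X Y r * a r^2) u / sqrt(X u^2+Y u^2)) * (Y u / sqrt(X u^2+Y u^2))) th).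
2: { intro u. field. auto. }
apply is_derive_unique.
pose proof (comb _ _ _ _ th (-A) _ _ _ _ (P_der X Y a A th HX HY Ha Hp)
   (n1_der X Y th (proj1 (HX th)) (proj1 (HY th)) (Hp th))
   (Derive_correct _ _ (Q_ex X Y a th HX HY Ha Hp))
   (n2_der X Y th (proj1 (HX th)) (proj1 (HY th)) (Hp th))) as Hc.
cbv beta in Hc; rewrite m_der in Hc by auto; exact Hc.
Qed.

Lemma rhsy X Y a A th : Hsm X -> Hsm Y -> Hsa a -> (forall v, 0 < X v^2+Y v^2) ->
 Derive (fun u => (-1 + A*(kap X Y u)^2)/2 * (a u^2 / sqrt (X u^2+Y u^2)) * Y u
     + A*(Derive (fun r => kap X Y r * a r^2) u / (sqrt (X u^2+Y u^2))^2) * (X u)) th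
 = (A*kap X Y th*Derive (kap X Y) th*a th^2 + (-1 + A*kap X Y th^2)*a th*Derive a th) * (Y th / sqrt (X th^2+Y th^2))
   + ((-1 + A*(kap X Y th)^2)/2 * a th^2) * (kap X Y th * X th)
   + A * (Derive (fun u => Derive (fun r => kap X Y r * a r ^2) u / sqrt (X u^2 + Y u^2)) th * (X th / sqrt (X th^2+Y th^2))
       + ((Derive (kap X Y) th * a th^2 + kap X Y th * (2 * a th * Derive a th)) / sqrt (X th^2+Y th^2)) * (- kap X Y th * Y th)).
Proof.
intros HX HY Ha Hp.
assert (Hs: forall u, sqrt (X u^2+Y u^2) <> 0) by (intro u; apply Rgt_not_eq, sqrt_lt_R0; auto).
rewrite (Derive_ext _ (fun u => ((-1 + A*(kap X Y u)^2)/2 * a u^2) * (Y u / sqrt(X u^2+Y u^2)) + A * (Derive (fun r => kap X Y r * a r^2) u / sqrt(X u^2+Y u^2)) * (X u / sqrt(X u^2+Y u^2))) th).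
2: { intro u. field. auto. }
apply is_derive_unique.
pose proof (comb _ _ _ _ th A _ _ _ _ (P_der X Y a A th HX HY Ha Hp)
   (n2_der X Y th (proj1 (HX th)) (proj1 (HY th)) (Hp th))
   (Derive_correct _ _ (Q_ex X Y a th HX HY Ha Hp))
   (n1_der X Y th (proj1 (HX th)) (proj1 (HY th)) (Hp th))) as Hc.
cbv beta in Hc; rewrite m_der in Hc by auto; exact Hc.
Qed.

Ltac side_two := first [ exact I
 | match goal with H: ex_derive _ _ |- ex_derive _ _ => exact H end
 | match goal with |- 0 < _ => nra end
 | match goal with |- context [sqrt ?q] =>
     let h := fresh in assert (h : 0 < sqrt q) by (apply sqrt_lt_R0; nra);
     apply Rgt_not_eq; repeat apply Rmult_lt_0_compat; lra end ].

Lemma tF1_ex (P Q R S C : R->R) A u: ex_derive P u -> ex_derive Q u -> ex_derive R u -> ex_derive S u -> ex_derive C u -> 0 < P u^2+R u^2 ->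
  ex_derive (fun r => (1 + A * ((P r * Q r - R r * S r) / (sqrt (P r^2 + R r^2))^3)^2) * sqrt (P r^2 + R r^2) * C r) u.
Proof. intros. auto_derive. repeat split; try side_two. Qed.

Lemma tG_ex (P Q R S C : R->R) A u: ex_derive P u -> ex_derive Q u -> ex_derive R u -> ex_derive S u -> ex_derive C u -> 0 < P u^2+R u^2 ->
  ex_derive (fun r => (1 + A * ((P r * Q r - R r * S r) / (sqrt (P r^2 + R r^2))^3)^2) * C r) u.
Proof. intros. auto_derive. repeat split; try side_two. Qed.

Lemma sm_t f l t th: smooth2 f -> ex_derive (fun s => pd l f s th) t.
Proof. intros H. exact (proj1 (proj1 (H l) t th)). Qed.
Lemma sm_th f l t th: smooth2 f -> ex_derive (fun s => pd l f t s) th.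
Proof. intros H. exact (proj2 (proj1 (H l) t th)). Qed.

Lemma Hsm_of f t : smooth2 f -> Hsm (pth f t).
Proof. intros H v. split; [|split].
- exact (sm_th f (false::nil) t v H).
- exact (sm_th f (false::false::nil) t v H).
- exact (sm_th f (false::false::false::nil) t v H).
Qed.
Lemma Hsa_of f t : smooth2 f -> Hsa (f t).
Proof. intros H v. split.
- exact (sm_th f nil t v H).
- exact (sm_th f (false::nil) t v H).
Qed.

Lemma cont2 f l x y : smooth2 f -> continuity_2d_pt (pd l f) x y.
Proof. intros H. apply continuity_2d_pt_filterlim. exact (proj2 (H l) (x,y)). Qed.

Lemma schw f t th: smooth2 f -> pt (pth f) t th = pth (pt f) t th.
Proof.
intros H. unfold pt, pth.
apply (Schwarz f t th).
- exists (mkposreal 1 Rlt_0_1). intros u v _ _. repeat split.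
  + exact (sm_t f nil u v H).
  + exact (sm_th f nil u v H).
  + exact (sm_t f (false::nil) u v H).
  + exact (sm_th f (true::nil) u v H).
- exact (cont2 f (true::false::nil) t th H).
- exact (cont2 f (false::true::nil) t th H).
Qed.

Lemma exd_opp (f : R->R) u : ex_derive f u -> ex_derive (fun x => - f x) u.
Proof. intros; auto_derive; auto. Qed.
Lemma exd_mul (f g : R->R) u : ex_derive f u -> ex_derive g u -> ex_derive (fun x => f x * g x) u.
Proof. intros; auto_derive; auto. Qed.
Lemma Derive_oppR (f : R->R) u : Derive (fun x => - f x) u = - Derive f u.
Proof. apply Derive_opp. Qed.

Section S.
Variables (A t0 t1 : R) (cx cy a : R -> R -> R).
Hypotheses (H01 : t0 < t1) (Hcx : smooth2 cx) (Hcy : smooth2 cy) (Ha : smooth2 a)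
  (Himm : forall t th, t0 <= t <= t1 -> (pth cx t th, pth cy t th) <> (0, 0))
  (Hrel : forall t th, t0 <= t <= t1 ->
     pt cx t th = a t th * (- pth cy t th) / speed cx cy t th /\
     pt cy t th = a t th * pth cx t th / speed cx cy t th).

Lemma posq t th : t0 <= t <= t1 -> 0 < (pth cx t th)^2 + (pth cy t th)^2.
Proof.
intros Ht. specialize (Himm t th Ht).
destruct (Req_dec (pth cx t th) 0) as [E1|E1]; destruct (Req_dec (pth cy t th) 0) as [E2|E2].
- exfalso; apply Himm; rewrite E1, E2; reflexivity.
- rewrite E1. nra.
- nra.
- nra.
Qed.

Lemma spos t th : t0 <= t <= t1 -> 0 < speed cx cy t th.
Proof. intros Ht. unfold speed. apply sqrt_lt_R0. apply posq; auto. Qed.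

Lemma ct2_eq t th : t0 <= t <= t1 -> ct2 cx cy t th = (a t th)^2.
Proof.
intros Ht. unfold ct2. destruct (Hrel t th Ht) as [E1 E2]. rewrite E1, E2.
assert (Hs := spos t th Ht).
assert (Hq : (speed cx cy t th)^2 = (pth cx t th)^2 + (pth cy t th)^2).
{ unfold speed. rewrite pow2_sqrt; auto. pose proof (posq t th Ht); lra. }
field_simplify; [|lra]. rewrite Hq. field. pose proof (posq t th Ht); lra.
Qed.


Lemma Hsm_x t : Hsm (pth cx t). Proof. apply Hsm_of; auto. Qed.
Lemma Hsm_y t : Hsm (pth cy t). Proof. apply Hsm_of; auto. Qed.
Lemma Hsa_a t : Hsa (a t). Proof. apply Hsa_of; auto. Qed.
Lemma posv t : t0 <= t <= t1 -> forall v, 0 < (pth cx t v)^2 + (pth cy t v)^2.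
Proof. intros; apply posq; auto. Qed.

Definition Gt t th := Derive (fun r => (1 + A*(kappa cx cy r th)^2) * a r th) t.
Definition Zt t th := Derive (fun u => Derive (fun r => kappa cx cy t r * (a t r)^2) u / speed cx cy t u) th.

Lemma G_ex t th : t0 <= t <= t1 -> ex_derive (fun r => (1 + A*(kappa cx cy r th)^2) * a r th) t.
Proof.
intros Ht.
exact (tG_ex (fun r => pth cx r th) (fun r => pth (pth cy) r th) (fun r => pth cy r th) (fun r => pth (pth cx) r th) (fun r => a r th) A t
  (sm_t cx (false::nil) t th Hcx) (sm_t cy (false::false::nil) t th Hcy) (sm_t cy (false::nil) t th Hcy) (sm_t cx (false::false::nil) t th Hcx)
  (sm_t a nil t th Ha) (posq t th Ht)).
Qed.

Lemma ELx t th : t0 <= t <= t1 ->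
 pt (fun t th => (1 + A * (kappa cx cy t th)^2) * speed cx cy t th * pt cx t th) t th =
 Gt t th * (- pth cy t th)
 + ((1 + A*(kappa cx cy t th)^2) * a t th) * (- (Derive (a t) th * (pth cx t th / speed cx cy t th) + a t th * (- kappa cx cy t th * pth cy t th))).
Proof.
intros Ht.
transitivity (Derive (fun r => ((1 + A*(kappa cx cy r th)^2) * a r th) * (- pth cy r th)) t).
{ apply (Derive_eq_on _ _ t0 t1 t); auto.
  - exact (tF1_ex (fun r => pth cx r th) (fun r => pth (pth cy) r th) (fun r => pth cy r th) (fun r => pth (pth cx) r th) (fun r => pt cx r th) A t
     (sm_t cx (false::nil) t th Hcx) (sm_t cy (false::false::nil) t th Hcy) (sm_t cy (false::nil) t th Hcy) (sm_t cx (false::false::nil) t th Hcx)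
     (sm_t cx (true::nil) t th Hcx) (posq t th Ht)).
  - apply exd_mul. apply G_ex; auto. apply exd_opp. exact (sm_t cy (false::nil) t th Hcy).
  - intros r Hr. destruct (Hrel r th Hr) as [E1 _]. rewrite E1. field. apply Rgt_not_eq, spos; auto. }
rewrite Derive_mult; [| apply G_ex; auto | apply exd_opp; exact (sm_t cy (false::nil) t th Hcy)].
rewrite Derive_oppR.
assert (HD: Derive (fun r => pth cy r th) t = Derive (a t) th * (pth cx t th / speed cx cy t th) + a t th * (- kappa cx cy t th * pth cy t th)).
{ change (Derive (fun r => pth cy r th) t) with (pt (pth cy) t th). rewrite schw by auto.
  unfold pth at 1.
  rewrite (Derive_ext _ (fun v => a t v * pth cx t v / sqrt ((pth cx t v)^2 + (pth cy t v)^2)) th).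
  2: { intro v. exact (proj2 (Hrel t v Ht)). }
  exact (an1_der (pth cx t) (pth cy t) (a t) th (proj1 (Hsm_x t th)) (proj1 (Hsm_y t th)) (proj1 (Hsa_a t th)) (posq t th Ht)). }
rewrite HD. reflexivity.
Qed.

Lemma ELy t th : t0 <= t <= t1 ->
 pt (fun t th => (1 + A * (kappa cx cy t th)^2) * speed cx cy t th * pt cy t th) t th =
 Gt t th * (pth cx t th)
 + ((1 + A*(kappa cx cy t th)^2) * a t th) * (Derive (a t) th * (- (pth cy t th / speed cx cy t th)) + a t th * (- (kappa cx cy t th * pth cx t th))).
Proof.
intros Ht.
transitivity (Derive (fun r => ((1 + A*(kappa cx cy r th)^2) * a r th) * (pth cx r th)) t).
{ apply (Derive_eq_on _ _ t0 t1 t); auto.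
  - exact (tF1_ex (fun r => pth cx r th) (fun r => pth (pth cy) r th) (fun r => pth cy r th) (fun r => pth (pth cx) r th) (fun r => pt cy r th) A t
     (sm_t cx (false::nil) t th Hcx) (sm_t cy (false::false::nil) t th Hcy) (sm_t cy (false::nil) t th Hcy) (sm_t cx (false::false::nil) t th Hcx)
     (sm_t cy (true::nil) t th Hcy) (posq t th Ht)).
  - apply exd_mul. apply G_ex; auto. exact (sm_t cx (false::nil) t th Hcx).
  - intros r Hr. destruct (Hrel r th Hr) as [_ E2]. rewrite E2. field. apply Rgt_not_eq, spos; auto. }
rewrite Derive_mult; [| apply G_ex; auto | exact (sm_t cx (false::nil) t th Hcx)].
assert (HD: Derive (fun r => pth cx r th) t = Derive (a t) th * (- (pth cy t th / speed cx cy t th)) + a t th * (- (kappa cx cy t th * pth cx t th))).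
{ change (Derive (fun r => pth cx r th) t) with (pt (pth cx) t th). rewrite schw by auto.
  unfold pth at 1.
  rewrite (Derive_ext _ (fun v => a t v * (- pth cy t v) / sqrt ((pth cx t v)^2 + (pth cy t v)^2)) th).
  2: { intro v. exact (proj1 (Hrel t v Ht)). }
  exact (an2_der (pth cx t) (pth cy t) (a t) th (proj1 (Hsm_x t th)) (proj1 (Hsm_y t th)) (proj1 (Hsa_a t th)) (posq t th Ht)). }
rewrite HD. reflexivity.
Qed.

Lemma ERx t th : t0 <= t <= t1 ->
 pth (fun t th => (-1 + A * (kappa cx cy t th)^2) / 2 * (ct2 cx cy t th / speed cx cy t th) * pth cx t th
   + A * (pth (fun t th => kappa cx cy t th * ct2 cx cy t th) t th / (speed cx cy t th)^2) * (- pth cy t th)) t th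
 = (A*kappa cx cy t th*Derive (kappa cx cy t) th*(a t th)^2 + (-1 + A*(kappa cx cy t th)^2)*a t th*Derive (a t) th) * (pth cx t th / speed cx cy t th)
   + ((-1 + A*(kappa cx cy t th)^2)/2 * (a t th)^2) * (- kappa cx cy t th * pth cy t th)
   + (-A) * (Zt t th * (pth cy t th / speed cx cy t th)
       + ((Derive (kappa cx cy t) th * (a t th)^2 + kappa cx cy t th * (2 * a t th * Derive (a t) th)) / speed cx cy t th) * (kappa cx cy t th * pth cx t th)).
Proof.
intros Ht.
assert (HW: forall u, pth (fun t th => kappa cx cy t th * ct2 cx cy t th) t u = Derive (fun r => kappa cx cy t r * (a t r)^2) u).
{ intro u. unfold pth at 1. apply Derive_ext. intro r. rewrite ct2_eq by auto. reflexivity. }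
transitivity (Derive (fun u => (-1 + A*(kappa cx cy t u)^2)/2 * ((a t u)^2 / speed cx cy t u) * pth cx t u + A*(Derive (fun r => kappa cx cy t r * (a t r)^2) u / (speed cx cy t u)^2) * (- pth cy t u)) th).
{ unfold pth at 1. apply Derive_ext. intro u. rewrite HW. rewrite ct2_eq by auto. reflexivity. }
exact (rhsx (pth cx t) (pth cy t) (a t) A th (Hsm_x t) (Hsm_y t) (Hsa_a t) (posv t Ht)).
Qed.

Lemma ERy t th : t0 <= t <= t1 ->
 pth (fun t th => (-1 + A * (kappa cx cy t th)^2) / 2 * (ct2 cx cy t th / speed cx cy t th) * pth cy t th
   + A * (pth (fun t th => kappa cx cy t th * ct2 cx cy t th) t th / (speed cx cy t th)^2) * (pth cx t th)) t th
 = (A*kappa cx cy t th*Derive (kappa cx cy t) th*(a t th)^2 + (-1 + A*(kappa cx cy t th)^2)*a t th*Derive (a t) th) * (pth cy t th / speed cx cy t th)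
   + ((-1 + A*(kappa cx cy t th)^2)/2 * (a t th)^2) * (kappa cx cy t th * pth cx t th)
   + A * (Zt t th * (pth cx t th / speed cx cy t th)
       + ((Derive (kappa cx cy t) th * (a t th)^2 + kappa cx cy t th * (2 * a t th * Derive (a t) th)) / speed cx cy t th) * (- kappa cx cy t th * pth cy t th)).
Proof.
intros Ht.
assert (HW: forall u, pth (fun t th => kappa cx cy t th * ct2 cx cy t th) t u = Derive (fun r => kappa cx cy t r * (a t r)^2) u).
{ intro u. unfold pth at 1. apply Derive_ext. intro r. rewrite ct2_eq by auto. reflexivity. }
transitivity (Derive (fun u => (-1 + A*(kappa cx cy t u)^2)/2 * ((a t u)^2 / speed cx cy t u) * pth cy t u + A*(Derive (fun r => kappa cx cy t r * (a t r)^2) u / (speed cx cy t u)^2) * (pth cx t u)) th).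
{ unfold pth at 1. apply Derive_ext. intro u. rewrite HW. rewrite ct2_eq by auto. reflexivity. }
exact (rhsy (pth cx t) (pth cy t) (a t) A th (Hsm_x t) (Hsm_y t) (Hsa_a t) (posv t Ht)).
Qed.

Lemma EA t th : a_eq A cx cy a t th <->
  Gt t th = (1 + 3 * A * (kappa cx cy t th)^2) / 2 * kappa cx cy t th * (a t th)^2 + A * (Zt t th / speed cx cy t th).
Proof. split; intro H; exact H. Qed.

Lemma pw t th : t0 <= t <= t1 -> (geodesic_eq A cx cy t th <-> a_eq A cx cy a t th).
Proof.
intros Ht. rewrite EA.
pose proof (ELx t th Ht) as E1. pose proof (ELy t th Ht) as E2.
pose proof (ERx t th Ht) as E3. pose proof (ERy t th Ht) as E4.
assert (Hs: speed cx cy t th <> 0) by (apply Rgt_not_eq, spos; auto).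
pose proof (posq t th Ht) as Hq.
unfold geodesic_eq. split.
- intros [H1 H2].
  pose proof (eq_trans (eq_sym E1) (eq_trans H1 E3)) as Hx.
  pose proof (eq_trans (eq_sym E2) (eq_trans H2 E4)) as Hy.
  apply Rminus_diag_eq in Hx. apply Rminus_diag_eq in Hy.
  set (Va := (1 + 3 * A * (kappa cx cy t th)^2) / 2 * kappa cx cy t th * (a t th)^2 + A * (Zt t th / speed cx cy t th)).
  assert (K1: (Gt t th - Va) * (- pth cy t th) = 0). { rewrite <- Hx. unfold Va. field. auto. }
  assert (K2: (Gt t th - Va) * (pth cx t th) = 0). { rewrite <- Hy. unfold Va. field. auto. }
  assert (K3: (Gt t th - Va) * ((pth cx t th)^2 + (pth cy t th)^2) = (Gt t th - Va) * (pth cx t th) * pth cx t th - (Gt t th - Va) * (- pth cy t th) * pth cy t th) by ring.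
  rewrite K1, K2 in K3. replace (0 * pth cx t th - 0 * pth cy t th) with 0 in K3 by ring.
  apply Rmult_integral in K3. destruct K3 as [K3|K3]; lra.
- intros HE. split.
  + refine (eq_trans E1 (eq_trans _ (eq_sym E3))).
    apply Rminus_diag_uniq. rewrite HE. field. auto.
  + refine (eq_trans E2 (eq_trans _ (eq_sym E4))).
    apply Rminus_diag_uniq. rewrite HE. field. auto.
Qed.

Lemma HDy t th : t0 <= t <= t1 -> Derive (fun r => pth cy r th) t = Derive (a t) th * (pth cx t th / speed cx cy t th) + a t th * (- kappa cx cy t th * pth cy t th).
Proof.
intros Ht.
  change (Derive (fun r => pth cy r th) t) with (pt (pth cy) t th). rewrite schw by auto.
  unfold pth at 1.
  rewrite (Derive_ext _ (fun v => a t v * pth cx t v / sqrt ((pth cx t v)^2 + (pth cy t v)^2)) th).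
  2: { intro v. exact (proj2 (Hrel t v Ht)). }
  exact (an1_der (pth cx t) (pth cy t) (a t) th (proj1 (Hsm_x t th)) (proj1 (Hsm_y t th)) (proj1 (Hsa_a t th)) (posq t th Ht)).
Qed.

Lemma HDx t th : t0 <= t <= t1 -> Derive (fun r => pth cx r th) t = Derive (a t) th * (- (pth cy t th / speed cx cy t th)) + a t th * (- (kappa cx cy t th * pth cx t th)).
Proof.
intros Ht.
  change (Derive (fun r => pth cx r th) t) with (pt (pth cx) t th). rewrite schw by auto.
  unfold pth at 1.
  rewrite (Derive_ext _ (fun v => a t v * (- pth cy t v) / sqrt ((pth cx t v)^2 + (pth cy t v)^2)) th).
  2: { intro v. exact (proj1 (Hrel t v Ht)). }
  exact (an2_der (pth cx t) (pth cy t) (a t) th (proj1 (Hsm_x t th)) (proj1 (Hsm_y t th)) (proj1 (Hsa_a t th)) (posq t th Ht)).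
Qed.

Lemma sp_t t th : t0 <= t <= t1 -> pt (speed cx cy) t th = - a t th * kappa cx cy t th * speed cx cy t th.
Proof.
intros Ht.
pose proof (is_derive_unique _ _ _ (sp_der (fun r => pth cx r th) (fun r => pth cy r th) t
   (sm_t cx (false::nil) t th Hcx) (sm_t cy (false::nil) t th Hcy) (posq t th Ht))) as E.
etransitivity; [exact E|]. cbv beta.
rewrite (HDx t th Ht), (HDy t th Ht).
assert (Hs := spos t th Ht).
assert (Hq : (speed cx cy t th)^2 = (pth cx t th)^2 + (pth cy t th)^2).
{ unfold speed. rewrite pow2_sqrt; auto. pose proof (posq t th Ht); lra. }
change (sqrt ((pth cx t th)^2 + (pth cy t th)^2)) with (speed cx cy t th).
apply Rminus_diag_uniq.
transitivity (- a t th * kappa cx cy t th * ((pth cx t th)^2 + (pth cy t th)^2 - (speed cx cy t th)^2) / speed cx cy t th).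
{ field. lra. }
rewrite Hq. field. lra.
Qed.

End S.

Theorem mainTheorem16 (A t0 t1 : R) (cx cy a : R -> R -> R) :
  0 <= A -> t0 < t1 ->
  smooth2 cx -> smooth2 cy -> smooth2 a ->
  periodic2 cx -> periodic2 cy -> periodic2 a ->
  (forall t th, t0 <= t <= t1 -> (pth cx t th, pth cy t th) <> (0, 0)) ->
  (forall t th, t0 <= t <= t1 ->
     pt cx t th * pth cx t th + pt cy t th * pth cy t th = 0) ->
  (forall t th, t0 <= t <= t1 ->
     pt cx t th = a t th * (- pth cy t th) / speed cx cy t th /\
     pt cy t th = a t th * pth cx t th / speed cx cy t th) ->
  ((forall t th, t0 <= t <= t1 -> geodesic_eq A cx cy t th) <->
   (forall t th, t0 <= t <= t1 -> a_eq A cx cy a t th)) /\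
  (forall t th, t0 <= t <= t1 ->
     pt (speed cx cy) t th = - a t th * kappa cx cy t th * speed cx cy t th).
Proof.
intros HA H01 Hcx Hcy Ha _ _ _ Himm _ Hrel. split.
- split; intros H t th Ht.
  + apply (proj1 (pw A t0 t1 cx cy a H01 Hcx Hcy Ha Himm Hrel t th Ht)); auto.
  + apply (proj2 (pw A t0 t1 cx cy a H01 Hcx Hcy Ha Himm Hrel t th Ht)); auto.
- intros t th Ht. eapply sp_t; eauto.
Qed.
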